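(* Let $R$ be a generalized Krull domain and let $S$ be an overring of $R$ such that $R \subseteq S$ satisfies going-down. Let $\Delta$ be the set of height one primes $\mathfrak{p}$ of $R$ with $\mathfrak{p}S \neq S$. Then $S = \bigcap_{\mathfrak{p} \in \Delta} R_{\mathfrak{p}}$.
   Context: All rings are commutative with identity; an overring of a domain $R$ is a ring between $R$ and its fraction field. A ring extension $A \subseteq B$ satisfies going-down if whenever $\mathfrak{p} \subset \mathfrak{q}$ are primes of $A$ and $Q$ is a prime of $B$ with $Q \cap A = \mathfrak{q}$, there is a prime $P \subseteq Q$ of $B$ with $P \cap A = \mathfrak{p}$. A domain $R$ is a generalized Krull domain if (1) $R = \bigcap R_{\mathfrak{p}}$ over all height one primes $\mathfrak{p}$ of $R$, (2) every nonzero element of $R$ lies in only finitely many height one primes, and (3) $R_{\mathfrak{p}}$ is a valuation domain for every height one prime $\mathfrak{p}$. *)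

(* Defs.v *)
From HB Require Import structures.
From mathcomp Require Import all_boot all_order all_algebra.
Set Implicit Arguments. Unset Strict Implicit. Unset Printing Implicit Defensive.
Import GRing.Theory.
Local Open Scope ring_scope.

(* Rings are modelled as subrings of a fixed field K (the fraction field).
   Subsets of K are predicates K -> Prop. *)
Section Defs.
Variable K : fieldType.

Definition subring (A : K -> Prop) : Prop :=
  [/\ A 0, A 1, (forall x y, A x -> A y -> A (x - y))
    & (forall x y, A x -> A y -> A (x * y))].

Definition frac_field_of (R : K -> Prop) : Prop :=
  forall x : K, exists a b, [/\ R a, R b, b != 0 & x = a / b].

Definition overring (R S : K -> Prop) : Prop :=
  subring S /\ (forall x, R x -> S x).

Definition is_ideal (A I : K -> Prop) : Prop :=
  [/\ (forall x, I x -> A x), I 0,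
      (forall x y, I x -> I y -> I (x + y))
    & (forall a x, A a -> I x -> I (a * x))].

Definition prime_ideal (A P : K -> Prop) : Prop :=
  [/\ is_ideal A P, ~ P 1
    & forall x y, A x -> A y -> P (x * y) -> P x \/ P y].

Definition height_one (A P : K -> Prop) : Prop :=
  [/\ prime_ideal A P, (exists x, P x /\ x != 0)
    & forall Q, prime_ideal A Q -> (forall x, Q x -> P x) ->
        (forall x, Q x -> x = 0) \/ (forall x, P x -> Q x)].

Definition localization (A P : K -> Prop) (x : K) : Prop :=
  exists a b, [/\ A a, A b, ~ P b & x = a / b].

Definition valuation_domain (V : K -> Prop) : Prop :=
  forall x : K, x != 0 -> V x \/ V x^-1.

(* the extended ideal P S is proper: 1 is not a finite sum of p_i s_i *)
Definition ext_proper (S P : K -> Prop) : Prop :=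
  ~ exists (n : nat) (p s : 'I_n -> K),
      [/\ forall i, P (p i), forall i, S (s i) & \sum_(i < n) p i * s i = 1].

Definition going_down (R S : K -> Prop) : Prop :=
  forall p q Q : K -> Prop,
    prime_ideal R p -> prime_ideal R q -> (forall x, p x -> q x) ->
    prime_ideal S Q -> (forall x, (Q x /\ R x) <-> q x) ->
    exists P : K -> Prop,
      [/\ prime_ideal S P, (forall x, P x -> Q x)
        & forall x, (P x /\ R x) <-> p x].

Definition generalized_Krull (R : K -> Prop) : Prop :=
  [/\ (forall x, (forall P, height_one R P -> localization R P x) -> R x),
      (forall x, R x -> x != 0 -> exists (n : nat) (f : nat -> K -> Prop),
          forall P, height_one R P -> P x ->
            exists2 i, (i < n)%N & forall y, P y <-> f i y)
    & (forall P, height_one R P -> valuation_domain (localization R P))].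

End Defs.

(* Main.v *)
Require Import Defs.
From mathcomp Require Import all_boot all_order all_algebra.
From mathcomp Require classical_sets.
From Stdlib Require Import Classical.
From mathcomp Require Import ring.
Set Implicit Arguments. Unset Strict Implicit. Unset Printing Implicit Defensive.
Import GRing.Theory.
Local Open Scope ring_scope.

Lemma sr0 (K : fieldType) (A : K -> Prop) : subring A -> A 0.
Proof. by case. Qed.
Lemma sr1 (K : fieldType) (A : K -> Prop) : subring A -> A 1.
Proof. by case. Qed.
Lemma srB (K : fieldType) (A : K -> Prop) x y : subring A -> A x -> A y -> A (x - y).
Proof. by case=> _ _ h _; apply: h. Qed.
Lemma srM (K : fieldType) (A : K -> Prop) x y : subring A -> A x -> A y -> A (x * y).
Proof. by case=> _ _ _ h; apply: h. Qed.
Lemma srN (K : fieldType) (A : K -> Prop) x : subring A -> A x -> A (- x).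
Proof. move=> h hx; rewrite -sub0r; apply: srB => //; exact: sr0. Qed.
Lemma srD (K : fieldType) (A : K -> Prop) x y : subring A -> A x -> A y -> A (x + y).
Proof. move=> h hx hy; rewrite -[y]opprK; apply: srB => //; exact: srN. Qed.
Lemma srX (K : fieldType) (A : K -> Prop) x k : subring A -> A x -> A (x ^+ k).
Proof.
move=> h hx; elim: k => [|k IH]; first by rewrite expr0; exact: sr1.
by rewrite exprS; apply: srM.
Qed.

Lemma idl_sub (K : fieldType) (A I : K -> Prop) x : is_ideal A I -> I x -> A x.
Proof. by case=> h _ _ _; apply: h. Qed.
Lemma idl0 (K : fieldType) (A I : K -> Prop) : is_ideal A I -> I 0.
Proof. by case. Qed.
Lemma idlD (K : fieldType) (A I : K -> Prop) x y : is_ideal A I -> I x -> I y -> I (x + y).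
Proof. by case=> _ _ h _; apply: h. Qed.
Lemma idlM (K : fieldType) (A I : K -> Prop) a x : is_ideal A I -> A a -> I x -> I (a * x).
Proof. by case=> _ _ _ h; apply: h. Qed.
Lemma idlMr (K : fieldType) (A I : K -> Prop) a x : is_ideal A I -> A a -> I x -> I (x * a).
Proof. by move=> h ha hx; rewrite mulrC; apply: idlM h ha hx. Qed.

Lemma idl_sum (K : fieldType) (A I : K -> Prop) n (F : 'I_n -> K) :
  is_ideal A I -> (forall i, I (F i)) -> I (\sum_(i < n) F i).
Proof.
move=> h hF; apply: (big_ind I); [exact: idl0 h | move=> x y; exact: idlD h | move=> i _; exact: hF].
Qed.

Lemma prime_pow (K : fieldType) (A P : K -> Prop) r k :
  subring A -> prime_ideal A P -> A r -> ~ P r -> ~ P (r ^+ k).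
Proof.
move=> hA [hI h1 hp] hr hnr; elim: k => [|k IH]; first by rewrite expr0.
rewrite exprS => H; by case: (hp _ _ hr (srX k hA hr) H).
Qed.

Lemma prime_neq0 (K : fieldType) (A P : K -> Prop) b :
  prime_ideal A P -> ~ P b -> b != 0.
Proof. by case=> hI _ _ hb; apply/eqP => e; apply: hb; rewrite e; exact: idl0 hI. Qed.

Lemma locR (K : fieldType) (R P : K -> Prop) r :
  subring R -> prime_ideal R P -> R r -> localization R P r.
Proof.
move=> hR [_ h1 _] hr; exists r, 1; split => //; first exact: sr1.
by rewrite divr1.
Qed.

Lemma locM (K : fieldType) (R P : K -> Prop) x y :
  subring R -> prime_ideal R P -> localization R P x -> localization R P y ->
  localization R P (x * y).
Proof.
move=> hR hP [a [b [ha hb nb ->]]] [a' [b' [ha' hb' nb' ->]]].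
exists (a * a'), (b * b'); split; [exact: srM|exact: srM| |exact: mulf_div].
by case: hP => _ _ hp /hp [].
Qed.

Lemma locN (K : fieldType) (R P : K -> Prop) x :
  subring R -> prime_ideal R P -> localization R P x -> localization R P (- x).
Proof.
move=> hR hP [a [b [ha hb nb ->]]]; exists (- a), b; split => //; first exact: srN.
by rewrite mulNr.
Qed.

Lemma locD (K : fieldType) (R P : K -> Prop) x y :
  subring R -> prime_ideal R P -> localization R P x -> localization R P y ->
  localization R P (x + y).
Proof.
move=> hR hP [a [b [ha hb nb ->]]] [a' [b' [ha' hb' nb' ->]]].
exists (a * b' + a' * b), (b * b'); split.
- by apply: srD => //; apply: srM.
- exact: srM.
- by case: hP => _ _ hp /hp [].
- by rewrite addf_div //; apply: prime_neq0 hP _.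
Qed.

Lemma locX (K : fieldType) (R P : K -> Prop) x k :
  subring R -> prime_ideal R P -> localization R P x -> localization R P (x ^+ k).
Proof.
move=> hR hP hx; elim: k => [|k IH]; first by rewrite expr0; apply: locR => //; exact: sr1.
by rewrite exprS; apply: locM.
Qed.

Lemma locV (K : fieldType) (R P : K -> Prop) b :
  subring R -> prime_ideal R P -> R b -> ~ P b -> localization R P b^-1.
Proof.
move=> hR hP hb nb; exists 1, b; split => //; first exact: sr1.
by rewrite div1r.
Qed.

Lemma loc0 (K : fieldType) (R P : K -> Prop) :
  subring R -> prime_ideal R P -> localization R P 0.
Proof. move=> hR hP; apply: locR => //; exact: sr0. Qed.

Lemma prime_over_ideal (K : fieldType) (A J : K -> Prop) :
  subring A -> is_ideal A J -> ~ J 1 ->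
  exists P, prime_ideal A P /\ (forall x, J x -> P x).
Proof.
move=> hA hJ nJ1.
pose good (I : K -> Prop) := [/\ is_ideal A I, ~ I 1 & forall x, J x -> I x].
pose Pd (I : K -> Prop) := (forall x, ~ I x) \/ good I.
have [M [PM Mmax]] : exists M, Pd M /\ (forall B, classical_sets.proper M B -> ~ Pd B).
  apply: (@classical_sets.Zorn_bigcup K Pd) => F FP Ftot.
  case: (classic (exists X, F X /\ good X)) => [[X0 [FX0 gX0]]|nog]; last first.
    left => x [X FX Xx].
    case: (FP X FX) => [h|gX]; first exact: (h x).
    by apply: nog; exists X.
  right; split.
  - split.
    + move=> x [X FX Xx]; case: (FP X FX) => [h|[hX _ _]]; first by case: (h x).
      exact: idl_sub hX Xx.
    + by exists X0 => //; case: gX0 => h _ _; exact: idl0 h.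
    + move=> x y [X FX Xx] [Y FY Yy].
      case: (FP X FX) => [h|gX]; first by case: (h x).
      case: (FP Y FY) => [h|gY]; first by case: (h y).
      case: (Ftot X Y FX FY) => [XY|YX].
      * exists Y => //; case: gY => h _ _; apply: idlD h _ Yy; exact: XY.
      * exists X => //; case: gX => h _ _; apply: idlD h Xx _; exact: YX.
    + move=> a x ha [X FX Xx]; exists X => //.
      case: (FP X FX) => [h|[h _ _]]; first by case: (h x).
      exact: idlM h ha Xx.
  - move=> [X FX X1]; case: (FP X FX) => [h|[_ h _]]; [exact: (h 1)|exact: h].
  - by move=> x Jx; exists X0 => //; case: gX0 => _ _ h; exact: h.
have gM : good M.
  case: PM => // hM; exfalso; apply: (Mmax J); last by right.
  split; first by move=> x /hM.
  by move=> h; apply: (hM 0); apply: h; exact: idl0 hJ.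
case: gM => hMI nM1 JM.
exists M; split => //; split => // x y hx hy hxy.
apply: NNPP => /not_or_and [nx ny].
have gen : forall z, A z -> ~ M z -> exists m s, [/\ M m, A s & 1 = m + z * s].
  move=> z hz nz.
  pose B w := exists m s, [/\ M m, A s & w = m + z * s].
  have hB : is_ideal A B.
    split.
    - move=> w [m [s [hm hs ->]]]; apply: srD => //; [exact: idl_sub hMI hm|exact: srM].
    - exists 0, 0; split => //; [exact: idl0 hMI|exact: sr0|by rewrite mulr0 addr0].
    - move=> w w' [m [s [hm hs ->]]] [m' [s' [hm' hs' ->]]].
      exists (m + m'), (s + s'); split; [exact: idlD hMI hm hm'|exact: srD|].
      by rewrite mulrDr addrACA.
    - move=> a w ha [m [s [hm hs ->]]]; exists (a * m), (a * s); split.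
      + exact: idlM hMI ha hm.
      + exact: srM.
      + by rewrite mulrDr mulrCA.
  case: (classic (B 1)) => // nB1.
  exfalso; apply: (Mmax B).
    split.
      move=> w hw; exists w, 0; split => //; [exact: sr0|by rewrite mulr0 addr0].
    move=> sub; apply: nz; apply: sub; exists 0, 1; split.
    - exact: idl0 hMI.
    - exact: sr1.
    - by rewrite mulr1 add0r.
  right; split => // w Jw; exists w, 0; split; [exact: JM|exact: sr0|by rewrite mulr0 addr0].
have [m1 [s1 [hm1 hs1 e1]]] := gen x hx nx.
have [m2 [s2 [hm2 hs2 e2]]] := gen y hy ny.
apply: nM1.
have -> : (1 : K) = m1 + (x * s1) * m2 + (s1 * s2) * (x * y).
  have E : (m1 + x * s1) * (m2 + y * s2) = m1 * (m2 + y * s2) + (x * s1) * m2 + (s1 * s2) * (x * y).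
    by ring.
  by rewrite -e1 -e2 !mul1r mulr1 in E.
apply: (idlD hMI); first apply: (idlD hMI).
- exact: hm1.
- apply: (idlM hMI) hm2; exact: srM.
- apply: (idlM hMI) hxy; exact: srM.
Qed.

Lemma val_cmp (K : fieldType) (R p : K -> Prop) r s :
  valuation_domain (localization R p) -> r != 0 -> s != 0 ->
  exists t, localization R p t /\ (r = t * s \/ s = t * r).
Proof.
move=> hv nr ns; have : r / s != 0 by rewrite mulf_neq0 // invr_eq0.
case/hv => h.
- by exists (r / s); split => //; left; rewrite divfK.
- by exists (s / r); split; [rewrite -invf_div | right; rewrite divfK].
Qed.

Lemma rank1 (K : fieldType) (R p : K -> Prop) :
  subring R -> height_one R p -> valuation_domain (localization R p) ->
  forall c x, p c -> exists k, localization R p (c ^+ k * x).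
Proof.
move=> hR [hp [z [pz nz]] hmin] hv c x pc.
case: (classic (localization R p x)) => [hx|nx].
  by exists 0%N; rewrite expr0 mul1r.
have x0 : x != 0 by apply/eqP => e; apply: nx; rewrite e; exact: loc0.
have [a [b [ha hb nb ex]]] : localization R p x^-1.
  by case: (hv x x0) => // /nx.
have b0 : b != 0 := prime_neq0 hp nb.
have a0 : a != 0.
  by apply/eqP => e; move: ex; rewrite e mul0r => /eqP; rewrite invr_eq0 (negbTE x0).
have hpI := hp; case: hpI => hpi hp1 hpp.
pose Q r := R r /\ exists k, localization R p (r ^+ k * x).
have Q0 : Q 0 by split; [exact: sr0| exists 1%N; rewrite expr1 mul0r; exact: loc0].
have hQ : prime_ideal R Q.
  split.
  - split.
    + by move=> r [].
    + exact: Q0.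
    + move=> r s [hr [k hk]] [hs [m hm]]; split; first exact: srD.
      case: (eqVneq r 0) => [->|r0]; first by rewrite add0r; exists m.
      case: (eqVneq s 0) => [->|s0]; first by rewrite addr0; exists k.
      have [t [ht [->|->]]] := val_cmp hv r0 s0.
      * exists m; have -> : t * s + s = (t + 1) * s by rewrite mulrDl mul1r.
        rewrite exprMn -mulrA; apply: locM => //.
        apply: locX => //; apply: locD => //; apply: locR => //; exact: sr1.
      * exists k; have -> : r + t * r = (1 + t) * r by rewrite mulrDl mul1r.
        rewrite exprMn -mulrA; apply: locM => //.
        apply: locX => //; apply: locD => //; apply: locR => //; exact: sr1.
    + move=> a' r ha' [hr [k hk]]; split; first exact: srM.
      exists k; rewrite exprMn -mulrA; apply: locM => //; apply: locR => //; exact: srX.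
  - by case=> _ [k]; rewrite expr1n mul1r.
  - move=> r s hr hs [_ [k hk]].
    case: (eqVneq r 0) => [->|r0]; first by left.
    case: (eqVneq s 0) => [->|s0]; first by right.
    have [t [ht [er|es]]] := val_cmp hv r0 s0.
    + left; split => //; exists (k + k)%N.
      have -> : r ^+ (k + k) * x = t ^+ k * ((r * s) ^+ k * x).
        by rewrite {1 2}er exprD !exprMn; ring.
      by apply: locM => //; apply: locX.
    + right; split => //; exists (k + k)%N.
      have -> : s ^+ (k + k) * x = t ^+ k * ((r * s) ^+ k * x).
        by rewrite {1 2}es exprD !exprMn; ring.
      by apply: locM => //; apply: locX.
have Qp : forall y, Q y -> p y.
  move=> r [hr [k hk]]; apply: NNPP => nr.
  have nrk := prime_pow (k:=k) hR hp hr nr.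
  apply: nx; have rk0 : r ^+ k != 0 := prime_neq0 hp nrk.
  have -> : x = (r ^+ k)^-1 * (r ^+ k * x) by rewrite mulrA mulVf // mul1r.
  apply: locM => //; apply: locV => //; exact: srX.
case: (hmin Q hQ Qp) => [h|h]; last by case: (h c pc).
exfalso; apply: (negP a0); apply/eqP; apply: h; split => //; exists 1%N.
rewrite expr1; have -> : a * x = b.
  by rewrite -[x]invrK ex invf_div mulrC divfK.
by apply: locR.
Qed.

Lemma loc_ext (K : fieldType) (R P P0 : K -> Prop) z :
  (forall y, P y <-> P0 y) -> localization R P0 z -> localization R P z.
Proof.
move=> e [a [b [ha hb nb ->]]]; exists a, b; split => // /e; exact: nb.
Qed.

Lemma gd_prime (K : fieldType) (R S p M : K -> Prop) :
  subring R -> overring R S -> going_down R S -> prime_ideal R p -> prime_ideal S M ->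
  (forall y, p y -> M y) ->
  exists P, [/\ prime_ideal S P, (forall y, P y -> M y) & forall y, (P y /\ R y) <-> p y].
Proof.
move=> hR [hS RS] gd hp hM pM.
pose q y := M y /\ R y.
have hMc := hM; case: hMc => hMI nM1 hMp.
have hq : prime_ideal R q.
  split.
  - split.
    + by move=> y [].
    + by split; [exact: idl0 hMI | exact: sr0].
    + move=> y z [My Ry] [Mz Rz]; split; [exact: idlD hMI My Mz | exact: srD].
    + move=> a y ha [My Ry]; split; [exact: idlM hMI (RS _ ha) My | exact: srM].
  - by case.
  - move=> y z Ry Rz [Myz _].
    by case: (hMp y z (RS _ Ry) (RS _ Rz) Myz) => h; [left|right].
have pq : forall y, p y -> q y.
  move=> y py; split; first exact: pM.
  by case: hp => hpi _ _; exact: idl_sub hpi py.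
have [P [hP PM PR]] := gd p q M hp hq pq hM (fun y => conj id id).
by exists P.
Qed.

Lemma gd_ext (K : fieldType) (R S p M : K -> Prop) :
  subring R -> overring R S -> going_down R S -> prime_ideal R p -> prime_ideal S M ->
  (forall y, p y -> M y) -> ext_proper S p.
Proof.
move=> hR hO gd hp hM pM.
have [P [hP PM PR]] := gd_prime hR hO gd hp hM pM.
move=> [n [ps [ss [hps hss e]]]].
case: hP => hPI nP1 _; apply: nP1; rewrite -e.
apply: (idl_sum hPI) => i; apply: (idlMr hPI) => //.
by case: (PR (ps i)) => _ /(_ (hps i)) [].
Qed.

Definition genI (K : fieldType) (S p : K -> Prop) (z : K) : Prop :=
  exists (n : nat) (ps ss : 'I_n -> K),
    [/\ forall i, p (ps i), forall i, S (ss i) & \sum_(i < n) ps i * ss i = z].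

Lemma genI_ideal (K : fieldType) (R S p : K -> Prop) :
  subring S -> (forall y, R y -> S y) -> is_ideal R p -> is_ideal S (genI S p).
Proof.
move=> hS RS hp; split.
- move=> z [n [ps [ss [hps hss <-]]]].
  apply: (big_ind S); [exact: sr0 | move=> u v; exact: srD | move=> i _].
  apply: srM => //; apply: RS; exact: idl_sub hp (hps i).
- by exists 0%N, (fun _ => 0), (fun _ => 0); split => // *; [exact: idl0 hp|exact: sr0|rewrite big_ord0].
- move=> z z' [n [ps [ss [hps hss <-]]]] [m [ps' [ss' [hps' hss' <-]]]].
  pose f (F G : _ -> K) (i : 'I_(n + m)) := match split i with inl j => F j | inr j => G j end.
  have L j : split (lshift m j) = inl j := unsplitK (inl _ j).
  have Rr j : split (rshift n j) = inr j := unsplitK (inr _ j).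
  exists (n + m)%N, (f ps ps'), (f ss ss'); split.
  + by move=> i; rewrite /f; case: (split i).
  + by move=> i; rewrite /f; case: (split i).
  + by rewrite big_split_ord /=; congr (_ + _); apply: eq_bigr => i _; rewrite /f ?L ?Rr.
- move=> a z ha [n [ps [ss [hps hss <-]]]].
  exists n, ps, (fun i => a * ss i); split => //.
  + by move=> i; exact: srM.
  + by rewrite mulr_sumr; apply: eq_bigr => i _; rewrite mulrCA.
Qed.

Theorem proposition6p3 (K : fieldType) (R S : K -> Prop) :
  subring R -> frac_field_of R -> generalized_Krull R ->
  overring R S -> going_down R S ->
  forall x : K,
    S x <-> (forall P, height_one R P -> ext_proper S P -> localization R P x).
Proof.
move=> hR hfr [gk1 gk2 gk3] hO gd x.
have hO' := hO; case: hO' => hS RS.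
split.
- move=> Sx p hp1 hext.
  have hp1' := hp1; case: hp1' => hp _ _.
  have hpc := hp; case: hpc => hpi hp1n hpp.
  have hG := genI_ideal hS RS hpi.
  have [M [hM GM]] := prime_over_ideal hS hG hext.
  have pM : forall y, p y -> M y.
    move=> y py; apply: GM; exists 1%N, (fun _ => y), (fun _ => 1); split.
    + by [].
    + move=> _; exact: sr1.
    + by rewrite big_ord1 mulr1.
  have [P [hP PM PR]] := gd_prime hR hO gd hp hM pM.
  apply: NNPP => nx.
  have x0 : x != 0 by apply/eqP => e; apply: nx; rewrite e; exact: loc0.
  have [a [b [ha hb nb ex]]] : localization R p x^-1.
    by case: (gk3 p hp1 x x0) => // /nx.
  have b0 : b != 0 := prime_neq0 hp nb.
  have a0 : a != 0.
    by apply/eqP => e; move: ex; rewrite e mul0r => /eqP; rewrite invr_eq0 (negbTE x0).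
  have eb : b = a * x by rewrite -[x]invrK ex invf_div mulrC divfK.
  case: (classic (p a)) => pa.
  + apply: nb; apply: (proj1 (PR b)); split => //; rewrite eb.
    case: hP => hPI _ _; apply: (idlMr hPI) => //; by case: (proj2 (PR a) pa).
  + apply: nx; rewrite -[x]invrK ex invf_div; apply: locM => //.
    * exact: locR.
    * exact: locV.
- move=> H; apply: NNPP => nSx.
  pose J w := S w /\ S (w * x).
  have hJ : is_ideal S J.
    split.
    + by move=> w [].
    + by split; rewrite ?mul0r; exact: sr0.
    + move=> w w' [Sw Swx] [Sw' Swx']; split; first exact: srD.
      by rewrite mulrDl; exact: srD.
    + move=> a w Sa [Sw Swx]; split; first exact: srM.
      by rewrite -mulrA; exact: srM.
  have nJ1 : ~ J 1 by case=> _; rewrite mul1r.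
  have [M [hM JM]] := prime_over_ideal hS hJ nJ1.
  have hMc := hM; case: hMc => hMI nM1 hMp.
  have [a [b [ha hb b0 ex]]] := hfr x.
  have [n [f hf]] := gk2 b hb b0.
  have claim : forall m, exists c, [/\ R c, ~ M c &
      forall P, height_one R P -> P b ->
        (exists2 i, (i < m)%N & forall y, P y <-> f i y) -> localization R P (c * x)].
    elim=> [|m [c [Rc nMc hc]]].
      exists 1; split; [exact: sr1 | done | by move=> P _ _ [i]].
    case: (classic (exists P0, [/\ height_one R P0, P0 b & forall y, P0 y <-> f m y]))
      => [[P0 [h0 P0b e0]]|nP0]; last first.
      exists c; split => // P hP Pb [i].
      rewrite ltnS leq_eqVlt => /orP [/eqP ei|lim] ei'.
      * by exfalso; apply: nP0; exists P; split => //; rewrite -ei.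
      * by apply: hc => //; exists i.
    have hp0 : prime_ideal R P0 by case: h0.
    case: (classic (forall y, P0 y -> M y)) => [P0M|].
    { have hx0 : localization R P0 x.
        apply: H => //; exact: gd_ext hR hO gd hp0 hM P0M.
      exists c; split => // P hP Pb [i].
      rewrite ltnS leq_eqVlt => /orP [/eqP ei|lim] ei'.
      * have ePP0 : forall y, P y <-> P0 y.
          by move=> y; rewrite ei'; rewrite ei; split => /e0.
        apply: (loc_ext ePP0); apply: locM => //; exact: locR.
      * by apply: hc => //; exists i. }
    move=> /not_all_ex_not; case=> d nimp; have [P0d nMd] := imply_to_and _ _ nimp.
    have [k hk] := rank1 hR h0 (gk3 P0 h0) x P0d.
    have Rd : R d by case: hp0 => hI _ _; exact: idl_sub hI P0d.
    exists (d ^+ k * c); split.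
    + by apply: srM => //; exact: srX.
    + move=> /(hMp _ _ (srX k hS (RS _ Rd)) (RS _ Rc)) [|//].
      exact: (prime_pow (k:=k) hS hM (RS _ Rd) nMd).
    + move=> P hP Pb [i]; have hPp : prime_ideal R P by case: hP.
      rewrite ltnS leq_eqVlt => /orP [/eqP ei|lim] ei'.
      * have ePP0 : forall y, P y <-> P0 y.
          by move=> y; rewrite ei'; rewrite ei; split => /e0.
        apply: (loc_ext ePP0); rewrite mulrAC; apply: locM => //; exact: locR.
      * rewrite -mulrA; apply: locM => //; first by apply: locR => //; exact: srX.
        by apply: hc => //; exists i.
  have [c [Rc nMc hc]] := claim n.
  have Rcx : R (c * x).
    apply: gk1 => P hP; have hPp : prime_ideal R P by case: hP.
    case: (classic (P b)) => Pb.
    + by apply: hc => //; apply: hf.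
    + apply: locM => //; first exact: locR.
      by rewrite ex; exists a, b.
  by apply: nMc; apply: JM; split; [exact: RS | exact: RS].
Qed.
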